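(* Let $\beta\in\mathbb C$. Let $L$ be a complex Leibniz algebra, let $I$ be the ideal generated by all squares $[x,x]$, $x\in L$, and suppose $L/I\cong\mathfrak{e}(2)$ and $I$, as a right $\mathfrak{e}(2)$-module via $(i,x+I)\mapsto[i,x]$, is isomorphic to the four-dimensional module with basis $X_1,\dots,X_4$ and action $(X_2,p_+)=X_4$, $(X_1,p_-)=X_3$, $(X_1,l)=-\tfrac12X_1-\beta X_4$, $(X_2,l)=\tfrac12X_2-\beta X_3$, $(X_3,l)=\tfrac12X_3$, $(X_4,l)=-\tfrac12X_4$ (all other products zero). Then there exists a basis $\{l,p_+,p_-,X_1,X_2,X_3,X_4\}$ of $L$ (with $X_i\in I$) in which the only nonzero products are $[l,p_+]=p_+$, $[p_+,l]=-p_+$, $[l,p_-]=-p_-$, $[p_-,l]=p_-$, $[X_2,p_+]=X_4$, $[X_1,p_-]=X_3$, $[X_1,l]=-\tfrac12X_1-\beta X_4$, $[X_2,l]=\tfrac12X_2-\beta X_3$, $[X_3,l]=\tfrac12X_3$, $[X_4,l]=-\tfrac12X_4$.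
   Context: A (right) Leibniz algebra is a vector space $L$ with a bilinear bracket satisfying $[[x,y],z]=[[x,z],y]+[x,[y,z]]$. The ideal $I$ generated by squares satisfies $[L,I]=0$, so $L/I$ is a Lie algebra and $I$ is a right $L/I$-module via $(i,x+I)\mapsto[i,x]$. $\mathfrak{e}(2)$ is the complex Lie algebra with basis $\{l,p_+,p_-\}$ and brackets $[l,p_+]=p_+$, $[l,p_-]=-p_-$, $[p_+,p_-]=0$. *)

(* Defs.v *)
From mathcomp Require Import all_boot all_algebra.
From mathcomp Require Import reals Rstruct complex.
Set Implicit Arguments. Unset Strict Implicit. Unset Printing Implicit Defensive.
Import GRing.Theory.
Local Open Scope ring_scope.

Definition CC : fieldType := (Rdefinitions.R)[i].

Section Leibniz.
Variable L : lmodType CC.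
Variable br : L -> L -> L.

Definition bilinear_br : Prop :=
  (forall x, linear (br x)) /\ (forall y, linear (fun x => br x y)).

Definition right_leibniz : Prop :=
  forall x y z, br (br x y) z = br (br x z) y + br x (br y z).

Definition is_leibniz_algebra : Prop := bilinear_br /\ right_leibniz.

Definition is_subspace (S : L -> Prop) : Prop :=
  S 0 /\ (forall x y, S x -> S y -> S (x + y)) /\ (forall (a : CC) x, S x -> S (a *: x)).

Definition is_ideal (S : L -> Prop) : Prop :=
  is_subspace S /\ (forall x y, S x -> S (br x y) /\ S (br y x)).

Definition sq_ideal (x : L) : Prop :=
  forall S : L -> Prop, is_ideal S -> (forall y, S (br y y)) -> S x.

Definition is_basis n (b : 'I_n -> L) : Prop :=
  (forall c : 'I_n -> CC, \sum_(k < n) c k *: b k = 0 -> forall k, c k = 0) /\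
  (forall x, exists c : 'I_n -> CC, x = \sum_(k < n) c k *: b k).
End Leibniz.

Definition ev n (k : 'I_n) : 'rV[CC]_n := \row_(j < n) (j == k)%:R.

Definition e2_l : 'I_3 := inord 0.
Definition e2_pp : 'I_3 := inord 1.
Definition e2_pm : 'I_3 := inord 2.

Definition e2_table (i j : 'I_3) : 'rV[CC]_3 :=
  match nat_of_ord i, nat_of_ord j with
  | 0, 1 => ev e2_pp
  | 1, 0 => - ev e2_pp
  | 0, 2 => - ev e2_pm
  | 2, 0 => ev e2_pm
  | _, _ => 0
  end.

Definition e2_br (x y : 'rV[CC]_3) : 'rV[CC]_3 :=
  \sum_(i < 3) \sum_(j < 3) (x 0 i * y 0 j) *: e2_table i j.

(* The four-dimensional right e(2)-module M_beta = CC^4, basis X1..X4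
   (indices 0..3):
   (X2,p+)=X4, (X1,p-)=X3, (X1,l)=-1/2 X1 - beta X4, (X2,l)=1/2 X2 - beta X3,
   (X3,l)=1/2 X3, (X4,l)=-1/2 X4, all other products of basis elements 0. *)
Definition X_ (k : nat) : 'rV[CC]_4 := ev (inord k.-1).

Definition mod_table (beta : CC) (i : 'I_4) (j : 'I_3) : 'rV[CC]_4 :=
  match nat_of_ord i, nat_of_ord j with
  | 1, 1 => X_ 4
  | 0, 2 => X_ 3
  | 0, 0 => - 2^-1 *: X_ 1 - beta *: X_ 4
  | 1, 0 => 2^-1 *: X_ 2 - beta *: X_ 3
  | 2, 0 => 2^-1 *: X_ 3
  | 3, 0 => - 2^-1 *: X_ 4
  | _, _ => 0
  end.

Definition mod_act (beta : CC) (m : 'rV[CC]_4) (e : 'rV[CC]_3) : 'rV[CC]_4 :=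
  \sum_(i < 4) \sum_(j < 3) (m 0 i * e 0 j) *: mod_table beta i j.

(* The multiplication table of the conclusion, for an ordered family
   b = (l, p+, p-, X1, X2, X3, X4) (indices 0..6). *)
Definition target_table (L : lmodType CC) (beta : CC) (b : 'I_7 -> L)
    (i j : 'I_7) : L :=
  let B k := b (inord k) in
  match nat_of_ord i, nat_of_ord j with
  | 0, 1 => B 1
  | 1, 0 => - B 1
  | 0, 2 => - B 2
  | 2, 0 => B 2
  | 4, 1 => B 6
  | 3, 2 => B 5
  | 3, 0 => - 2^-1 *: B 3 - beta *: B 6
  | 4, 0 => 2^-1 *: B 4 - beta *: B 5
  | 5, 0 => 2^-1 *: B 5
  | 6, 0 => - 2^-1 *: B 6
  | _, _ => 0
  end.

(* Main.v *)
Require Import Defs.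
From mathcomp Require Import all_boot all_algebra.
From mathcomp Require Import reals Rstruct complex.
From mathcomp Require Import ring.
Import GRing.Theory.
Local Open Scope ring_scope.

Section Lin.
Variables (U V : lmodType CC) (f : U -> V) (Hf : linear f).
Lemma lin0 : f 0 = 0.
Proof. have h := Hf 1 0 0; rewrite !scale1r addr0 in h.
by apply: (addrI (f 0)); rewrite addr0 -h. Qed.
Lemma linD x y : f (x + y) = f x + f y.
Proof. by have h := Hf 1 x y; rewrite !scale1r in h. Qed.
Lemma linZ a x : f (a *: x) = a *: f x.
Proof. by have h := Hf a x 0; rewrite !addr0 lin0 addr0 in h. Qed.
Lemma linN x : f (- x) = - f x.
Proof. by rewrite -scaleN1r linZ scaleN1r. Qed.
Lemma linB x y : f (x - y) = f x - f y.
Proof. by rewrite linD linN. Qed.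
End Lin.
Arguments lin0 {U V f} Hf.
Arguments linD {U V f} Hf x y.
Arguments linZ {U V f} Hf a x.
Arguments linN {U V f} Hf x.
Arguments linB {U V f} Hf x y.

Lemma nzCC (x : CC) (n : nat) : 2 * x = n.+1%:R \/ 2 * x = - n.+1%:R -> x != 0.
Proof.
move=> h; apply/eqP => x0; move: h; rewrite x0 mulr0 => -[] /eqP.
  by rewrite eq_sym Num.Theory.pnatr_eq0.
by rewrite eq_sym oppr_eq0 Num.Theory.pnatr_eq0.
Qed.

Lemma two_nz : (2 : CC) != 0.
Proof. by rewrite Num.Theory.pnatr_eq0. Qed.


Lemma evE n (k : 'I_n) j : ev k 0 j = (j == k)%:R.
Proof. by rewrite mxE. Qed.

Lemma evIE n (k : nat) (j : 'I_n.+1) : (k < n.+1)%N -> ev (inord k) 0 j = (val j == k)%:R.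
Proof. by move=> hk; rewrite evE -val_eqE /= inordK. Qed.

Lemma sum_ev n (V : lmodType CC) (a : 'I_n) (F : 'I_n -> V) :
  \sum_(i < n) ev a 0 i *: F i = F a.
Proof.
rewrite (bigD1 a) //= big1 => [|i /negbTE ne]; first by rewrite evE eqxx scale1r addr0.
by rewrite evE ne scale0r.
Qed.

Lemma sum_ev2 n p (V : lmodType CC) (x : 'rV[CC]_n) (b : 'I_p) (F : 'I_n -> 'I_p -> V) :
  \sum_(i < n) \sum_(j < p) (x 0 i * ev b 0 j) *: F i j = \sum_(i < n) x 0 i *: F i b.
Proof.
apply: eq_bigr => i _; rewrite -(@sum_ev p V b (fun j => x 0 i *: F i j)).
by apply: eq_bigr => j _; rewrite scalerA mulrC.
Qed.

Lemma e2_br_ev a b : e2_br (ev a) (ev b) = e2_table a b.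
Proof. by rewrite /e2_br sum_ev2 sum_ev. Qed.

Lemma mod_act_ev beta a b : mod_act beta (ev a) (ev b) = mod_table beta a b.
Proof. by rewrite /mod_act sum_ev2 sum_ev. Qed.

Lemma val_l : nat_of_ord e2_l = 0%N. Proof. by rewrite inordK. Qed.
Lemma val_pp : nat_of_ord e2_pp = 1%N. Proof. by rewrite inordK. Qed.
Lemma val_pm : nat_of_ord e2_pm = 2%N. Proof. by rewrite inordK. Qed.

Lemma modl beta (m : 'rV[CC]_4) (k : nat) (hk : (k < 4)%N) :
  (mod_act beta m (ev e2_l)) 0 (inord k) =
  match k with
  | 0 => - 2^-1 * m 0 (inord 0)
  | 1 => 2^-1 * m 0 (inord 1)
  | 2 => - beta * m 0 (inord 1) + 2^-1 * m 0 (inord 2)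
  | _ => - beta * m 0 (inord 0) - 2^-1 * m 0 (inord 3)
  end.
Proof.
rewrite /mod_act sum_ev2 !big_ord_recl big_ord0 /mod_table val_l /= /X_ /=.
rewrite !mxE.
have E a b : (a < 4)%N -> (b < 4)%N -> (inord a == inord b :> 'I_4) = (a == b).
  by move=> ha hb; rewrite -val_eqE /= !inordK.
have i0 : (inord 0 : 'I_4) = ord0 by apply: val_inj; rewrite /= inordK.
have i1 : (inord 1 : 'I_4) = lift ord0 ord0 by apply: val_inj; rewrite /= inordK.
have i2 : (inord 2 : 'I_4) = lift ord0 (lift ord0 ord0) by apply: val_inj; rewrite /= inordK.
have i3 : (inord 3 : 'I_4) = lift ord0 (lift ord0 (lift ord0 ord0)) by apply: val_inj; rewrite /= inordK.
case: k hk => [|[|[|[|k]]]] // hk; rewrite !E //= ?i0 ?i1 ?i2 ?i3; ring.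
Qed.

Lemma sum3 (V : zmodType) (F : 'I_3 -> V) :
  \sum_(k < 3) F k = F (inord 0) + F (inord 1) + F (inord 2).
Proof.
rewrite !big_ord_recl big_ord0 addr0 !addrA.
by repeat (congr (_ + _)); congr F; apply: val_inj; rewrite /= inordK.
Qed.
Lemma sum4 (V : zmodType) (F : 'I_4 -> V) :
  \sum_(k < 4) F k = F (inord 0) + F (inord 1) + F (inord 2) + F (inord 3).
Proof.
rewrite !big_ord_recl big_ord0 addr0 !addrA.
by repeat (congr (_ + _)); congr F; apply: val_inj; rewrite /= inordK.
Qed.
Lemma sum7 (V : zmodType) (F : 'I_7 -> V) :
  \sum_(k < 7) F k = F (inord 0) + F (inord 1) + F (inord 2) + F (inord 3)
     + F (inord 4) + F (inord 5) + F (inord 6).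
Proof.
rewrite !big_ord_recl big_ord0 addr0 !addrA.
by repeat (congr (_ + _)); congr F; apply: val_inj; rewrite /= inordK.
Qed.

Lemma row_sum_ev n (m : 'rV[CC]_n) : m = \sum_(k < n) m 0 k *: ev k.
Proof.
apply/rowP => j; rewrite summxE (bigD1 j) //= big1 => [|k /negbTE nk].
  by rewrite !mxE eqxx mulr1 addr0.
by rewrite !mxE eq_sym nk mulr0.
Qed.

Lemma evE3 (j k : nat) : (j < 3)%N -> (k < 3)%N ->
  ev (inord k : 'I_3) 0 (inord j) = (j == k)%:R.
Proof. by move=> hj hk; rewrite evE -val_eqE /= !inordK. Qed.
Lemma evE4 (j k : nat) : (j < 4)%N -> (k < 4)%N ->
  ev (inord k : 'I_4) 0 (inord j) = (j == k)%:R.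
Proof. by move=> hj hk; rewrite evE -val_eqE /= !inordK. Qed.

Lemma inordE3 (j k : nat) : (j < 3)%N -> (k < 3)%N ->
  (inord j == inord k :> 'I_3) = (j == k).
Proof. by move=> hj hk; rewrite -val_eqE /= !inordK. Qed.
Lemma inordE4 (j k : nat) : (j < 4)%N -> (k < 4)%N ->
  (inord j == inord k :> 'I_4) = (j == k).
Proof. by move=> hj hk; rewrite -val_eqE /= !inordK. Qed.

Lemma row4P (u v : 'rV[CC]_4) :
  (forall k, (k < 4)%N -> u 0 (inord k) = v 0 (inord k)) -> u = v.
Proof.
move=> h; apply/rowP => j; rewrite -(inord_val j); apply: h; exact: ltn_ord.
Qed.

Lemma modl_eig beta (lam : CC) (m : 'rV[CC]_4) :
  2^-1 + lam != 0 -> 2^-1 - lam != 0 ->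
  mod_act beta m (ev e2_l) = lam *: m -> m = 0.
Proof.
move=> d1 d2 e.
have ek k : (k < 4)%N -> (mod_act beta m (ev e2_l)) 0 (inord k) = lam * m 0 (inord k).
  by move=> hk; rewrite e mxE.
have e0 := ek 0%N erefl; have e1 := ek 1%N erefl; have e2 := ek 2%N erefl;
  have e3 := ek 3%N erefl.
rewrite !modl // in e0 e1 e2 e3.
have z0 : m 0 (inord 0) = 0.
  have h : (2^-1 + lam) * m 0 (inord 0) = 0.
    transitivity (lam * m 0 (inord 0) - (- 2^-1 * m 0 (inord 0))); first by ring.
    by rewrite -e0 subrr.
  by move/eqP: h; rewrite mulf_eq0 (negbTE d1) => /eqP.
have z1 : m 0 (inord 1) = 0.
  have h : (2^-1 - lam) * m 0 (inord 1) = 0.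
    transitivity (2^-1 * m 0 (inord 1) - lam * m 0 (inord 1)); first by ring.
    by rewrite e1 subrr.
  by move/eqP: h; rewrite mulf_eq0 (negbTE d2) => /eqP.
have z2 : m 0 (inord 2) = 0.
  have h : (2^-1 - lam) * m 0 (inord 2) = 0.
    transitivity ((- beta * m 0 (inord 1) + 2^-1 * m 0 (inord 2)) - lam * m 0 (inord 2)).
      by rewrite z1; ring.
    by rewrite e2 subrr.
  by move/eqP: h; rewrite mulf_eq0 (negbTE d2) => /eqP.
have z3 : m 0 (inord 3) = 0.
  have h : (2^-1 + lam) * m 0 (inord 3) = 0.
    transitivity (lam * m 0 (inord 3) - (- beta * m 0 (inord 0) - 2^-1 * m 0 (inord 3))).
      by rewrite z0; ring.
    by rewrite e3 subrr.
  by move/eqP: h; rewrite mulf_eq0 (negbTE d1) => /eqP.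
apply: row4P => k hk; rewrite mxE.
by case: k hk => [|[|[|[|k]]]] // _.
Qed.

Lemma modl_solve beta (lam : CC) (t : 'rV[CC]_4) :
  2^-1 + lam != 0 -> 2^-1 - lam != 0 ->
  exists m, mod_act beta m (ev e2_l) - lam *: m = t.
Proof.
move=> d1 d2.
have d1' : 1 + lam * 2 != 0.
  have -> : 1 + lam * 2 = 2 * (2^-1 + lam) by field.
  by apply: mulf_neq0; rewrite ?Num.Theory.pnatr_eq0.
have d2' : 1 + - lam * 2 != 0.
  have -> : 1 + - lam * 2 = 2 * (2^-1 - lam) by field.
  by apply: mulf_neq0; rewrite ?Num.Theory.pnatr_eq0.
set t0 := t 0 (inord 0); set t1 := t 0 (inord 1); set t2 := t 0 (inord 2);
  set t3 := t 0 (inord 3).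
set m0 := - t0 / (2^-1 + lam); set m1 := t1 / (2^-1 - lam).
set m2 := (t2 + beta * m1) / (2^-1 - lam).
set m3 := - (t3 + beta * m0) / (2^-1 + lam).
exists (\row_(k < 4) match nat_of_ord k with 0 => m0 | 1 => m1 | 2 => m2 | _ => m3 end).
apply: row4P => k hk; rewrite !mxE modl // !mxE !inordK //.
case: k hk => [|[|[|[|k]]]] // _; rewrite /m3 /m2 /m1 /m0 /t0 /t1 /t2 /t3; field; rewrite ?d1' ?d2' //.
Qed.

Section Main.
Variables (beta : CC) (L : lmodType CC) (br : L -> L -> L)
  (phi : {linear L -> 'rV[CC]_3}) (psi : L -> 'rV[CC]_4).
Hypothesis HL : is_leibniz_algebra br.
Hypothesis Hker : forall x, phi x = 0 <-> sq_ideal br x.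
Hypothesis Hsurj : forall e, exists x, phi x = e.
Hypothesis Hhom : forall x y, phi (br x y) = e2_br (phi x) (phi y).
Hypothesis Hpsil : forall (a : CC) x y, sq_ideal br x -> sq_ideal br y ->
       psi (a *: x + y) = a *: psi x + psi y.
Hypothesis Hpsii : forall x y, sq_ideal br x -> sq_ideal br y -> psi x = psi y -> x = y.
Hypothesis Hpsis : forall m, exists x, sq_ideal br x /\ psi x = m.
Hypothesis Hact : forall i x, sq_ideal br i -> psi (br i x) = mod_act beta (psi i) (phi x).

Local Notation I := (sq_ideal br).

Lemma Hr x : linear (br x). Proof. exact: HL.1.1. Qed.
Lemma Hl y : linear (fun x => br x y). Proof. exact: HL.1.2. Qed.
Lemma Hleib x y z : br (br x y) z = br (br x z) y + br x (br y z).
Proof. exact: HL.2. Qed.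

Lemma brx0 x : br x 0 = 0. Proof. exact: lin0 (Hr x). Qed.
Lemma brxD x y z : br x (y + z) = br x y + br x z. Proof. exact: linD (Hr x) y z. Qed.
Lemma brxZ x a y : br x (a *: y) = a *: br x y. Proof. exact: linZ (Hr x) a y. Qed.
Lemma brxN x y : br x (- y) = - br x y. Proof. exact: linN (Hr x) y. Qed.
Lemma brxB x y z : br x (y - z) = br x y - br x z. Proof. exact: linB (Hr x) y z. Qed.
Lemma br0x x : br 0 x = 0. Proof. exact: lin0 (Hl x). Qed.
Lemma brDx x y z : br (y + z) x = br y x + br z x. Proof. exact: linD (Hl x) y z. Qed.
Lemma brZx x a y : br (a *: y) x = a *: br y x. Proof. exact: linZ (Hl x) a y. Qed.
Lemma brNx x y : br (- y) x = - br y x. Proof. exact: linN (Hl x) y. Qed.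
Lemma brBx x y z : br (y - z) x = br y x - br z x. Proof. exact: linB (Hl x) y z. Qed.

Lemma I0 : I 0. Proof. by move=> S [[]]. Qed.
Lemma ID x y : I x -> I y -> I (x + y).
Proof. by move=> hx hy S hS hsq; have [[_ [hD _]] _] := hS; apply: hD; [apply: hx|apply: hy]. Qed.
Lemma IZ a x : I x -> I (a *: x).
Proof. by move=> hx S hS hsq; have [[_ [_ hZ]] _] := hS; apply: hZ; apply: hx. Qed.
Lemma IN x : I x -> I (- x).
Proof. by move=> hx; rewrite -scaleN1r; apply: IZ. Qed.
Lemma IB x y : I x -> I y -> I (x - y).
Proof. by move=> hx hy; apply: ID => //; apply: IN. Qed.
Lemma Isq y : I (br y y). Proof. by move=> S hS hsq. Qed.
Lemma Ibrl x y : I x -> I (br x y).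
Proof. by move=> hx S hS hsq; have [_ h] := hS; exact: (h x y (hx S hS hsq)).1. Qed.
Lemma Ibrr x y : I x -> I (br y x).
Proof. by move=> hx S hS hsq; have [_ h] := hS; exact: (h x y (hx S hS hsq)).2. Qed.

Lemma brI x i : I i -> br x i = 0.
Proof.
move=> hi; move: x; apply: (hi (fun i => forall x, br x i = 0)).
- split; [split; [|split]|].
  + by move=> x; rewrite brx0.
  + by move=> x y hx hy z; rewrite brxD hx hy addr0.
  + by move=> a x hx z; rewrite brxZ hx scaler0.
  + move=> x y hx; split => z.
    * have := Hleib z x y; rewrite hx br0x (hx (br z y)) add0r => /eqP.
      by rewrite eq_sym => /eqP.
    * have := Hleib z y x; rewrite (hx (br z y)) hx br0x add0r.
      by move/esym.
- by move=> y z; apply: (addrI (br (br z y) y)); rewrite addr0 -Hleib.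
Qed.

Lemma psi0 : psi 0 = 0.
Proof.
have h := Hpsil 1 0 0 I0 I0; rewrite !scale1r addr0 in h.
by apply: (addrI (psi 0)); rewrite addr0 -h.
Qed.
Lemma psiD x y : I x -> I y -> psi (x + y) = psi x + psi y.
Proof. by move=> hx hy; have := Hpsil 1 x y hx hy; rewrite !scale1r. Qed.
Lemma psiZ a x : I x -> psi (a *: x) = a *: psi x.
Proof. by move=> hx; have := Hpsil a x 0 hx I0; rewrite !addr0 psi0 addr0. Qed.
Lemma psiN x : I x -> psi (- x) = - psi x.
Proof. by move=> hx; rewrite -scaleN1r psiZ // scaleN1r. Qed.
Lemma psiB x y : I x -> I y -> psi (x - y) = psi x - psi y.
Proof. by move=> hx hy; rewrite psiD ?psiN //; apply: IN. Qed.
Lemma psi_eq0 x : I x -> psi x = 0 -> x = 0.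
Proof. by move=> hx h; apply: Hpsii => //; [apply: I0|rewrite psi0]. Qed.

Lemma phiI x : I x -> phi x = 0. Proof. by move/Hker. Qed.

Lemma eig (lam : CC) z y : 2^-1 + lam != 0 -> 2^-1 - lam != 0 ->
  phi z = ev e2_l -> I y -> br y z = lam *: y -> y = 0.
Proof.
move=> d1 d2 hz hy e; apply: psi_eq0 => //.
apply: (@modl_eig beta lam _ d1 d2).
by rewrite -hz -Hact // e psiZ.
Qed.

Lemma solve (lam : CC) z g : 2^-1 + lam != 0 -> 2^-1 - lam != 0 ->
  phi z = ev e2_l -> I g -> exists a, I a /\ br a z - lam *: a = g.
Proof.
move=> d1 d2 hz hg.
have [m hm] := modl_solve beta lam (psi g) d1 d2.
have [a [ha pa]] := Hpsis m.
exists a; split => //.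
apply: Hpsii => //; first by apply: IB; [apply: Ibrl | apply: IZ].
by rewrite psiB ?psiZ ?Hact ?pa ?hz //; [apply: Ibrl | apply: IZ].
Qed.


Ltac solveI := repeat first [ done | apply: I0 | apply: ID | apply: IB | apply: IN | apply: IZ | apply: Ibrl ].

Lemma main_aux : exists b : 'I_7 -> L,
    is_basis b /\
    (forall k : 'I_7, (3 <= nat_of_ord k)%N -> sq_ideal br (b k)) /\
    (forall i j : 'I_7, br (b i) (b j) = target_table beta b i j).
Proof.
have n0p : (2^-1 + 0 : CC) != 0 by apply: (@nzCC _ 0); left; field.
have n0m : (2^-1 - 0 : CC) != 0 by apply: (@nzCC _ 0); left; field.
have nm1p : (2^-1 + -1 : CC) != 0 by apply: (@nzCC _ 0); right; field.
have nm1m : (2^-1 - -1 : CC) != 0 by apply: (@nzCC _ 2); left; field.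
have n1p : (2^-1 + 1 : CC) != 0 by apply: (@nzCC _ 2); left; field.
have n1m : (2^-1 - 1 : CC) != 0 by apply: (@nzCC _ 0); right; field.
have nm2p : (2^-1 + -2 : CC) != 0 by apply: (@nzCC _ 2); right; field.
have nm2m : (2^-1 - -2 : CC) != 0 by apply: (@nzCC _ 4); left; field.
have n2p : (2^-1 + 2 : CC) != 0 by apply: (@nzCC _ 4); left; field.
have n2m : (2^-1 - 2 : CC) != 0 by apply: (@nzCC _ 2); right; field.
have [l0 hl0] := Hsurj (ev e2_l).
have [a0 [ha0 ea0]] := solve 0 l0 (- br l0 l0) n0p n0m hl0 (IN _ (Isq l0)).
rewrite scale0r subr0 in ea0.
pose l := l0 + a0.
have hl : phi l = ev e2_l by rewrite linearD hl0 (phiI _ ha0) addr0.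
have hll : br l l = 0.
  rewrite /l brxD !brDx (brI l0 _ ha0) (brI a0 _ ha0) ea0.
  by rewrite !addr0 subrr.
have [q0 hq0] := Hsurj (ev e2_pp).
have hg1 : I (- (br q0 l + q0)).
  apply: IN; apply/Hker.
  by rewrite linearD Hhom hq0 hl e2_br_ev /e2_table val_pp val_l /= addNr.
have [a1 [ha1 ea1]] := solve (-1) l _ nm1p nm1m hl hg1.
pose pp := q0 + a1.
have hpp : phi pp = ev e2_pp by rewrite linearD hq0 (phiI _ ha1) addr0.
have hppl : br pp l = - pp.
  have E : br a1 l = - (br q0 l + q0) - a1 by rewrite -ea1 scaleN1r opprK addrK.
  rewrite /pp brDx E opprD !addrA subrr add0r.
  by rewrite opprD.
have [r0 hr0] := Hsurj (ev e2_pm).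
have hg2 : I (- (br r0 l - r0)).
  apply: IN; apply/Hker.
  by rewrite linearB Hhom hr0 hl e2_br_ev /e2_table val_pm val_l /= subrr.
have [a2 [ha2 ea2]] := solve 1 l _ n1p n1m hl hg2.
pose pm := r0 + a2.
have hpm : phi pm = ev e2_pm by rewrite linearD hr0 (phiI _ ha2) addr0.
have hpml : br pm l = pm.
  have E : br a2 l = - (br r0 l - r0) + a2 by rewrite -ea2 scale1r subrK.
  rewrite /pm brDx E opprB addrA addrCA subrr addr0.
  by [].
clearbody l pp pm.
have [x1 [hx1 px1]] := Hpsis (ev (inord 0)).
have [x2 [hx2 px2]] := Hpsis (ev (inord 1)).
have [x3 [hx3 px3]] := Hpsis (ev (inord 2)).
have [x4 [hx4 px4]] := Hpsis (ev (inord 3)).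
pose bn (k : nat) := match k with 0 => l | 1 => pp | 2 => pm | 3 => x1 | 4 => x2 | 5 => x3 | _ => x4 end.
exists (fun k : 'I_7 => bn k).
have ord7 (k : 'I_7) : exists2 n, (n < 7)%N & k = inord n.
  by exists (nat_of_ord k); rewrite ?inord_val.
split; [|split].
- split.
  + move=> c h k.
    rewrite sum7 /= !inordK //= in h.
    have hphi : phi (c (inord 0) *: l + c (inord 1) *: pp + c (inord 2) *: pm +
        c (inord 3) *: x1 + c (inord 4) *: x2 + c (inord 5) *: x3 +
        c (inord 6) *: x4) = 0 by rewrite h linear0.
    rewrite !linearD !linearZ /= hl hpp hpm (phiI _ hx1) (phiI _ hx2) (phiI _ hx3)
      (phiI _ hx4) !scaler0 !addr0 in hphi.
    have e j : (j < 3)%N -> (c (inord 0) *: ev e2_l + c (inord 1) *: ev e2_pp +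
        c (inord 2) *: ev e2_pm) 0 (inord j) = 0 by move=> hj; rewrite hphi mxE.
    have z0 : c (inord 0) = 0.
      by have := e 0%N erefl; rewrite !mxE /e2_l /e2_pp /e2_pm !inordE3 //= ?mulr1n ?mulr0n ?mulr1 ?mulr0 ?addr0 ?add0r.
    have z1 : c (inord 1) = 0.
      by have := e 1%N erefl; rewrite !mxE /e2_l /e2_pp /e2_pm !inordE3 //= ?mulr1n ?mulr0n ?mulr1 ?mulr0 ?addr0 ?add0r.
    have z2 : c (inord 2) = 0.
      by have := e 2%N erefl; rewrite !mxE /e2_l /e2_pp /e2_pm !inordE3 //= ?mulr1n ?mulr0n ?mulr1 ?mulr0 ?addr0 ?add0r.
    rewrite z0 z1 z2 !scale0r !add0r in h.
    have hpsi : c (inord 3) *: ev (inord 0) + c (inord 4) *: ev (inord 1) +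
        c (inord 5) *: ev (inord 2) + c (inord 6) *: ev (inord 3) = 0 :> 'rV[CC]_4.
      rewrite -psi0 -h !psiD ?psiZ ?px1 ?px2 ?px3 ?px4 //; solveI.
    have f j : (j < 4)%N -> (c (inord 3) *: ev (inord 0) + c (inord 4) *: ev (inord 1) +
        c (inord 5) *: ev (inord 2) + c (inord 6) *: ev (inord 3) : 'rV[CC]_4) 0 (inord j) = 0.
      by move=> hj; rewrite hpsi mxE.
    have z3 : c (inord 3) = 0.
      by have := f 0%N erefl; rewrite !mxE !inordE4 //= ?mulr1n ?mulr0n ?mulr1 ?mulr0 ?addr0 ?add0r.
    have z4 : c (inord 4) = 0.
      by have := f 1%N erefl; rewrite !mxE !inordE4 //= ?mulr1n ?mulr0n ?mulr1 ?mulr0 ?addr0 ?add0r.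
    have z5 : c (inord 5) = 0.
      by have := f 2%N erefl; rewrite !mxE !inordE4 //= ?mulr1n ?mulr0n ?mulr1 ?mulr0 ?addr0 ?add0r.
    have z6 : c (inord 6) = 0.
      by have := f 3%N erefl; rewrite !mxE !inordE4 //= ?mulr1n ?mulr0n ?mulr1 ?mulr0 ?addr0 ?add0r.
    have [n hn ->] := ord7 k.
    by case: n hn => [|[|[|[|[|[|[|n]]]]]]].
  + move=> x.
    have dec : phi x = phi x 0 (inord 0) *: ev e2_l + phi x 0 (inord 1) *: ev e2_pp
        + phi x 0 (inord 2) *: ev e2_pm by rewrite {1}(row_sum_ev _ (phi x)) sum3.
    pose A := phi x 0 (inord 0) *: l + phi x 0 (inord 1) *: pp + phi x 0 (inord 2) *: pm.
    pose y := x - A.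
    have hy : I y.
      have pA : phi A = phi x 0 (inord 0) *: ev e2_l + phi x 0 (inord 1) *: ev e2_pp
          + phi x 0 (inord 2) *: ev e2_pm by rewrite /A !linearD !linearZ hl hpp hpm.
      by apply/Hker; rewrite /y linearB pA -dec subrr.
    have ex : x = y + A by rewrite /y subrK.
    clearbody y.
    pose m := psi y.
    have ey : y = m 0 (inord 0) *: x1 + m 0 (inord 1) *: x2 + m 0 (inord 2) *: x3
        + m 0 (inord 3) *: x4.
      apply: Hpsii => //; first by solveI.
      rewrite !psiD ?psiZ ?px1 ?px2 ?px3 ?px4; try solveI.
      by rewrite {1}(row_sum_ev _ (psi y)) sum4.
    exists (fun k : 'I_7 => match nat_of_ord k with 0 => phi x 0 (inord 0)
      | 1 => phi x 0 (inord 1) | 2 => phi x 0 (inord 2) | 3 => m 0 (inord 0)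
      | 4 => m 0 (inord 1) | 5 => m 0 (inord 2) | _ => m 0 (inord 3) end).
    rewrite sum7 /= !inordK //=.
    rewrite {1}ex ey /A.
    by rewrite addrC !addrA.
- move=> k; have [n hn ->] := ord7 k; rewrite inordK //.
  by case: n hn => [|[|[|[|[|[|[|n]]]]]]].
- move=> i j; have [n hn ->] := ord7 i; have [n' hn' ->] := ord7 j.
  case: n hn => [|[|[|[|[|[|[|n]]]]]]] // hn; case: n' hn' => [|[|[|[|[|[|[|n']]]]]]] // hn';
    rewrite /target_table /= !inordK //=.
  all: try by rewrite brI.
  all: try (apply: Hpsii; [by solveI | by solveI | ];
    rewrite Hact // ?px1 ?px2 ?px3 ?px4 ?hl ?hpp ?hpm mod_act_ev /mod_table
       ?val_l ?val_pp ?val_pm !inordK //= /X_ /=;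
    rewrite ?psi0 ?psiB ?psiZ ?psiN ?psiZ ?px1 ?px2 ?px3 ?px4; solveI; done).
  - apply/eqP; rewrite -subr_eq0; apply/eqP.
    apply: (eig (-1) l _ nm1p nm1m hl).
      by apply/Hker; rewrite linearB Hhom hl hpp e2_br_ev /e2_table val_l val_pp /= subrr.
    rewrite brBx Hleib hll br0x add0r hppl brxN scaleN1r opprB.
    by rewrite addrC opprK.
  - apply/eqP; rewrite -addr_eq0; apply/eqP.
    apply: (eig 1 l _ n1p n1m hl).
      by apply/Hker; rewrite linearD Hhom hl hpm e2_br_ev /e2_table val_l val_pm /= addNr.
    by rewrite brDx Hleib hll br0x add0r hpml scale1r.
  - apply: (eig (-2) l _ nm2p nm2m hl).
      by apply/Hker; rewrite Hhom hpp e2_br_ev /e2_table val_pp.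
    by rewrite Hleib hppl brNx brxN -opprD scaleNr scaler_nat mulr2n.
  - apply: (eig 0 l _ n0p n0m hl).
      by apply/Hker; rewrite Hhom hpp hpm e2_br_ev /e2_table val_pp val_pm.
    by rewrite Hleib hppl hpml brNx addNr scale0r.
  - apply: (eig 0 l _ n0p n0m hl).
      by apply/Hker; rewrite Hhom hpp hpm e2_br_ev /e2_table val_pp val_pm.
    by rewrite Hleib hppl hpml brxN addrN scale0r.
  - apply: (eig 2 l _ n2p n2m hl).
      by apply/Hker; rewrite Hhom hpm e2_br_ev /e2_table val_pm.
    by rewrite Hleib hpml scaler_nat mulr2n.
Qed.

End Main.

Theorem mainTheorem7 (beta : CC) (L : lmodType CC) (br : L -> L -> L)
  (phi : {linear L -> 'rV[CC]_3}) (psi : L -> 'rV[CC]_4) :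
  is_leibniz_algebra br ->
  (* phi induces a Lie algebra isomorphism L/I ~= e(2) *)
  (forall x, phi x = 0 <-> sq_ideal br x) ->
  (forall e, exists x, phi x = e) ->
  (forall x y, phi (br x y) = e2_br (phi x) (phi y)) ->
  (* psi restricts to a right-module isomorphism I ~= M_beta *)
  (forall (a : CC) x y, sq_ideal br x -> sq_ideal br y ->
       psi (a *: x + y) = a *: psi x + psi y) ->
  (forall x y, sq_ideal br x -> sq_ideal br y -> psi x = psi y -> x = y) ->
  (forall m, exists x, sq_ideal br x /\ psi x = m) ->
  (forall i x, sq_ideal br i -> psi (br i x) = mod_act beta (psi i) (phi x)) ->
  exists b : 'I_7 -> L,
    is_basis b /\
    (forall k : 'I_7, (3 <= nat_of_ord k)%N -> sq_ideal br (b k)) /\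
    (forall i j : 'I_7, br (b i) (b j) = target_table beta b i j).
Proof.
move=> H1 H2 H3 H4 H5 H6 H7 H8.
exact: (@main_aux beta L br phi psi H1 H2 H3 H4 H5 H6 H7 H8).
Qed.
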